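(* Let $m\ge1$ and $A=(a_0,\ldots,a_m)$ real with $a_0,a_m\ne0$. Suppose $\omega\in\mathbb{C}$ satisfies $P_A(\omega)=0$ and $|\omega|>1$. Then for every $\varepsilon>0$ there exists $n_0$ such that for every $n>n_0$ the polynomial $T_{n,A}$ has a (complex) root $\xi$ with $\left|\xi-\tfrac12(\omega+\omega^{-1})\right|<\varepsilon$.
   Context: $T_k$ denotes the Chebyshev polynomial of the first kind, $T_k(\cos\theta)=\cos k\theta$. For $A=(a_0,\ldots,a_m)$ real with $a_0,a_m\ne0$ and $n\ge m$, $T_{n,A}(x)=\sum_{i=0}^m a_iT_{n-i}(x)$ and $P_A(x)=\sum_{i=0}^m a_ix^{m-i}$. *)

(* Defs.v *)
From HB Require Import structures.
From mathcomp Require Import all_boot all_order all_algebra.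
Set Implicit Arguments. Unset Strict Implicit. Unset Printing Implicit Defensive.
Import Order.TTheory GRing.Theory Num.Theory.
Local Open Scope ring_scope.

(* Chebyshev polynomials of the first kind, via the standard recurrence
   T_0 = 1, T_1 = X, T_(k+2) = 2 X T_(k+1) - T_k
   (equivalently T_k(cos t) = cos (k t)). *)
Fixpoint cheb_pair (R : nzRingType) (k : nat) : {poly R} * {poly R} :=
  match k with
  | 0 => (1, 'X)
  | k'.+1 => let (p, q) := cheb_pair R k' in (q, 2%:R *: 'X * q - p)
  end.

Definition chebT (R : nzRingType) (k : nat) : {poly R} := (cheb_pair R k).1.

Definition TnA (R : nzRingType) (m n : nat) (a : nat -> R) : {poly R} :=
  \sum_(i < m.+1) a i *: chebT R (n - i).

Definition PA (R : nzRingType) (m : nat) (a : nat -> R) : {poly R} :=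
  \sum_(i < m.+1) a i *: 'X^(m - i).

(* Main.v *)
Require Import Defs.
From HB Require Import structures.
From mathcomp Require Import all_boot all_order all_algebra.
From mathcomp Require Import ring zify.
Import Order.TTheory GRing.Theory Num.Theory.
Local Open Scope ring_scope.



Lemma cheb_eval (C : numFieldType) (z : C) (hz : z != 0) (k : nat) :
  2%:R * (cheb_pair C k).1.[(z + z^-1) / 2%:R] = z ^+ k + z ^- k /\
  2%:R * (cheb_pair C k).2.[(z + z^-1) / 2%:R] = z ^+ k.+1 + z ^- k.+1.
Proof.
have h2 : (2%:R : C) != 0 by rewrite pnatr_eq0.
elim: k => [|k [IH1 IH2]].
  have -> : (cheb_pair C 0).1 = 1 by [].
  have -> : (cheb_pair C 0).2 = 'X by [].
  rewrite hornerX expr0 expr1 invr1; split; first by rewrite hornerC mulr1.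
  by rewrite mulrC -mulrA mulVf // mulr1.
case E: (cheb_pair C k) => [p q]; rewrite E /= in IH1 IH2.
have -> : cheb_pair C k.+1 = (q, 2%:R *: 'X * q - p) by rewrite /= E.
split; first exact: IH2.
rewrite [(_, _).2]/=.
rewrite hornerD hornerN hornerM hornerZ hornerX.
have -> : 2%:R * (2%:R * ((z + z^-1) / 2%:R) * q.[(z + z^-1) / 2%:R] - p.[(z + z^-1) / 2%:R])
  = (z + z^-1) * (2%:R * q.[(z + z^-1) / 2%:R]) - 2%:R * p.[(z + z^-1) / 2%:R] by field.
rewrite IH1 IH2 !exprS !invfM.
have hk : z ^+ k != 0 by rewrite expf_neq0.
field; rewrite hk hz //.
Qed.

Lemma nat_ineq (d j : nat) : (d ^ j + d ^ j.+1 <= d.+1 ^ j.+1)%N.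
Proof.
have H : (d ^ j <= d.+1 ^ j)%N by elim: j => // j IH; rewrite !expnS leq_mul.
by rewrite !expnS mulSn leq_add // leq_mul.
Qed.

Lemma coef_root_bound (C : numFieldType) (c e : C) (bs : seq C) :
  0 < e -> (forall b, b \in bs -> e <= `|b|) ->
  forall k, `|(c *: \prod_(b <- bs) ('X - b%:P))`_k| * e ^+ k <=
    ((size bs ^ k)%N)%:R * `|(c *: \prod_(b <- bs) ('X - b%:P))`_0|.
Proof.
move=> he; elim: bs => [|b bs IH] Hb k.
  rewrite big_nil alg_polyC !coefC /=; case: k => [|k] /=.
    by rewrite expr0 mulr1 expn0 mul1r.
  by rewrite normr0 mul0r exp0n // mul0r.
have Hb' : forall b, b \in bs -> e <= `|b|.
  by move=> x hx; apply: Hb; rewrite inE hx orbT.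
have hb : e <= `|b| by apply: Hb; rewrite inE eqxx.
move: (IH Hb') => {}IH.
rewrite big_cons scalerAr.
set h := c *: \prod_(b <- bs) ('X - b%:P) in IH *.
rewrite mulrBl !coefB !coefXM !coefCM eqxx sub0r normrN.
case: k => [|j].
  by rewrite eqxx sub0r normrN expr0 mulr1 expn0 mul1r.
have -> : (j.+1 == 0%N) = false by [].
rewrite (_ : j.+1.-1 = j) // normrM.
apply: (le_trans (ler_wpM2r (exprn_ge0 _ (ltW he)) (ler_normB _ _))).
rewrite normrM mulrDl.
apply: (le_trans (y := `|b| * `|h`_0| * ((size bs ^ j)%N%:R + (size bs ^ j.+1)%N%:R))).
  rewrite mulrDr; apply: lerD.
    have -> : `|h`_j| * e ^+ j.+1 = e * (`|h`_j| * e ^+ j) by rewrite exprS; ring.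
    have -> : `|b| * `|h`_0| * (size bs ^ j)%:R = `|b| * ((size bs ^ j)%:R * `|h`_0|) by ring.
    apply: ler_pM => //; first exact: ltW.
    by rewrite mulr_ge0 ?normr_ge0 ?exprn_ge0 ?ltW.
  have -> : `|b| * `|h`_j.+1| * e ^+ j.+1 = `|b| * (`|h`_j.+1| * e ^+ j.+1) by ring.
  have -> : `|b| * `|h`_0| * (size bs ^ j.+1)%:R = `|b| * ((size bs ^ j.+1)%:R * `|h`_0|) by ring.
  by apply: ler_wpM2l; [exact: normr_ge0 | exact: IH].
rewrite mulrC -natrD; apply: ler_wpM2r; first by rewrite mulr_ge0 ?normr_ge0.
by rewrite ler_nat nat_ineq.
Qed.



Lemma bernoulli (C : numDomainType) (y : C) (n : nat) :
  0 <= y -> 1 + n%:R * y <= (1 + y) ^+ n.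
Proof.
move=> hy; elim: n => [|n IH]; first by rewrite mul0r addr0 expr0.
rewrite exprSr.
apply: (le_trans (y := (1 + n%:R * y) * (1 + y))).
  have -> : (1 + n%:R * y) * (1 + y) = 1 + n.+1%:R * y + n%:R * (y * y).
    by rewrite -addn1 natrD; ring.
  by rewrite lerDl mulr_ge0 ?ler0n ?mulr_ge0.
by apply: ler_wpM2r => //; rewrite addr_ge0.
Qed.

Lemma growth (C : numClosedFieldType) (j : nat) :
  forall t : C, 1 < t -> exists2 c : C, 0 < c & forall n : nat, c * ((n ^ j)%N)%:R <= t ^+ n.
Proof.
elim: j => [|j IH] t ht.
  exists 1 => // n; rewrite expn0 mul1r; exact: exprn_ege1 (ltW ht).
have t0 : 0 <= t by apply: le_trans (ltW ht); exact: ler01.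
set s := sqrtC t.
have s0 : 0 <= s by rewrite sqrtC_ge0.
have s2 : s ^+ 2 = t by rewrite sqrtCK.
have s1 : 1 < s by have := (expr_gte1 C).2 2%N s isT s0; rewrite s2 => <-.
have [c c0 hc] := IH s s1.
exists (c * (s - 1)); first by rewrite mulr_gt0 // subr_gt0.
move=> n.
have -> : c * (s - 1) * ((n ^ j.+1)%N)%:R = (c * ((n ^ j)%N)%:R) * (n%:R * (s - 1)).
  by rewrite expnSr natrM; ring.
rewrite -s2 -exprM mulnC exprM expr2.
apply: ler_pM.
- by apply: mulr_ge0; [exact: ltW | exact: ler0n].
- by apply: mulr_ge0; [exact: ler0n | rewrite subr_ge0; exact: ltW].
- exact: hc.
- have hs : 0 <= s - 1 by rewrite subr_ge0; exact: ltW.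
  have := @bernoulli C (s - 1) n hs; rewrite [1 + (s - 1)]addrC subrK.
  apply: le_trans; by rewrite lerDr.
Qed.



Definition Rp (C : nzRingType) (m : nat) (a : nat -> C) : {poly C} :=
  \sum_(i < m.+1) a i *: 'X^i.

Arguments Rp {C}.

Lemma TnA_F (C : numFieldType) (m n : nat) (a : nat -> C) (z : C) :
  z != 0 -> (m <= n)%N ->
  2%:R * (TnA m n a).[(z + z^-1) / 2%:R] * z ^+ n =
  ('X^(2 * n - m) * PA m a + Rp m a).[z].
Proof.
move=> hz hmn.
rewrite /TnA /PA /Rp horner_sum mulr_sumr mulr_suml hornerD hornerM hornerXn !horner_sum.
rewrite mulr_sumr -big_split /=; apply: eq_bigr => i _.
have hi : (i <= m)%N by rewrite -ltnS ltn_ord.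
rewrite !hornerZ !hornerXn.
have -> : 2%:R * (a i * (chebT C (n - i)).[(z + z^-1) / 2%:R]) * z ^+ n
   = a i * (2%:R * (cheb_pair C (n - i)).1.[(z + z^-1) / 2%:R]) * z ^+ n.
  by rewrite /chebT; ring.
rewrite (@cheb_eval C z hz (n - i)).1.
have -> : z ^+ (2 * n - m) * (a i * z ^+ (m - i)) = a i * z ^+ (2 * n - m + (m - i))
  by rewrite exprD; ring.
have e1 : (2 * n - m + (m - i) = i + (n - i) + (n - i))%N by lia.
have e2 : n = (i + (n - i))%N by lia.
have h1 : z ^+ i != 0 by rewrite expf_neq0.
have h2 : z ^+ (n - i) != 0 by rewrite expf_neq0.
rewrite e1; move: e2 h2; set j := (n - i)%N => e2 h2.
rewrite [in z ^+ n]e2 !exprD.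
by field.
Qed.



Lemma comp_poly_exp (C : comNzRingType) (p r : {poly C}) (k : nat) :
  (p ^+ k) \Po r = (p \Po r) ^+ k.
Proof.
elim: k => [|k IH]; first by rewrite !expr0 comp_polyC.
by rewrite !exprS comp_polyM IH.
Qed.

Lemma PA_coef (C : nzRingType) (m : nat) (a : nat -> C) : (PA m a)`_m = a 0%N.
Proof.
rewrite /PA coef_sum big_ord_recl /= coefZ coefXn subn0 eqxx mulr1.
rewrite big1 ?addr0 // => i _; rewrite coefZ coefXn.
have -> : (m == m - (bump 0 i))%N = false.
  have := ltn_ord i; rewrite /bump /=; lia.
by rewrite mulr0.
Qed.

Lemma size_PA (C : nzRingType) (m : nat) (a : nat -> C) : (size (PA m a) <= m.+1)%N.
Proof.
rewrite /PA; apply: (big_ind (fun p : {poly C} => (size p <= m.+1)%N)).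
- by rewrite size_poly0.
- by move=> p q hp hq; apply: leq_trans (size_polyD _ _) _; rewrite geq_max hp hq.
- move=> i _; apply: leq_trans (size_scale_leq _ _) _; rewrite size_polyXn ltnS leq_subr //.
Qed.

Lemma size_Rp (C : nzRingType) (m : nat) (a : nat -> C) : (size (Rp m a) <= m.+1)%N.
Proof.
rewrite /Rp; apply: (big_ind (fun p : {poly C} => (size p <= m.+1)%N)).
- by rewrite size_poly0.
- by move=> p q hp hq; apply: leq_trans (size_polyD _ _) _; rewrite geq_max hp hq.
- move=> i _; apply: leq_trans (size_scale_leq _ _) _; rewrite size_polyXn ltn_ord //.
Qed.

Lemma nat_facts (N0 m n : nat) : (1 <= m)%N -> (N0 + m < n)%N ->
  [/\ (N0 <= 2 * n - m)%N, (1 <= 2 * n - m)%N & (2 * n <= 2 * (2 * n - m))%N].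
Proof. move=> h1 h2; split; lia. Qed.

Lemma leq_expr (d D k : nat) : (d <= D)%N -> (d ^ k <= D ^ k)%N.
Proof. by move=> h; elim: k => // k IH; rewrite !expnS leq_mul. Qed.

Lemma size_F (C : nzRingType) (m n : nat) (a : nat -> C) : (m <= n)%N ->
  (size ('X^(2 * n - m) * PA m a + Rp m a)%R <= (2 * n).+1)%N.
Proof.
move=> hmn; apply: leq_trans (size_polyD _ _) _; rewrite geq_max; apply/andP; split.
  apply: leq_trans (size_polyMleq _ _) _; rewrite size_polyXn.
  have := size_PA _ m a; move: (size (PA m a)) => s hs; lia.
have := size_Rp _ m a; lia.
Qed.

Lemma size_bound (s1 s2 n N : nat) : (s1 <= ((s2.-1) * 1).+1)%N -> (s2 <= (2 * n).+1)%N ->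
  (2 * n <= 2 * N)%N -> (s1.-1 <= 2 * N)%N.
Proof. lia. Qed.



Theorem theorem2p4 (C : archiClosedFieldType) (m : nat) (a : nat -> C)
    (hm : (1 <= m)%N)
    (hreal : forall i, (i <= m)%N -> a i \is Num.real)
    (ha0 : a 0%N != 0) (ham : a m != 0)
    (w : C) (hroot : root (PA m a) w) (hw : 1 < `|w|) :
  forall eps : C, 0 < eps ->
  exists n0 : nat, forall n : nat, (n0 < n)%N -> (m <= n)%N ->
    exists xi : C, root (TnA m n a) xi /\
      `|xi - (w + w^-1) / 2%:R| < eps.
Proof.
move=> eps heps.
have PAnz : PA m a != 0.
  by apply/eqP => h; move: (PA_coef _ m a); rewrite h coef0 => /esym/eqP; rewrite (negbTE ha0).
have [k [q hq hPA]] := multiplicity_XsubC (PA m a) w.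
have qw : q.[w] != 0 by move: hq; rewrite PAnz.
set t := `|w|.
have t0 : 0 < t by apply: lt_trans hw.
have wnz : w != 0 by rewrite -normr_gt0.
set X1 : {poly C} := 'X + w%:P.
set rk := (Rp m a \Po X1)`_k.
set R0 := (Rp m a).[w].
set Q := `|q.[w]|.
have Q0 : 0 < Q by rewrite normr_gt0.
have [e [e0 eeps et]] : exists e : C, [/\ 0 < e, e <= eps & e <= t - 1].
  have ht1 : 0 < t - 1 by rewrite subr_gt0.
  have : (eps <= t - 1) || (t - 1 <= eps) by apply: real_leVge; apply: gtr0_real.
  by case/orP => h; [exists eps | exists (t - 1)]; split.
have [c c0 hc] := @growth C k.+1 t hw.
set K := 2%:R ^+ k * `|R0| + e ^+ k * `|rk|.
set D := e ^+ k * Q * c.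
have D0 : 0 < D by rewrite /D !mulr_gt0 // exprn_gt0.
have K0 : 0 <= K by rewrite /K addr_ge0 // mulr_ge0 ?normr_ge0 ?exprn_ge0 // ltW.
set N0 := Num.bound (K / D).
have hN0 : K / D < N0%:R by apply: archi_boundP; rewrite divr_ge0 // ltW.
exists (N0 + m)%N => n hn hmn.
have [hNN0 hN1 hNs] := @nat_facts N0 m n hm hn.
set N := (2 * n - m)%N.
set F := 'X^N * PA m a + Rp m a.
set g := F \Po X1.
have X1w : X1.[0] = w by rewrite /X1 hornerD hornerX hornerC add0r.
have g0 : g`_0 = R0.
  by rewrite -horner_coef0 horner_comp X1w /F hornerD hornerM (rootP hroot) mulr0 add0r.
have gk : g`_k = w ^+ N * q.[w] + rk.
  rewrite /g /F comp_polyD coefD; congr (_ + _).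
  rewrite hPA !comp_polyM !comp_poly_exp comp_polyB !comp_polyX comp_polyC.
  have -> : X1 - w%:P = 'X by rewrite /X1 addrK.
  by rewrite mulrA coefMXn ltnn subnn -horner_coef0 hornerM horner_comp horner_exp X1w.
have ek0 : 0 <= e ^+ k by apply: exprn_ge0; apply: ltW.
have hA : e ^+ k * (t ^+ N * Q) <= `|g`_k| * e ^+ k + e ^+ k * `|rk|.
  have h1 : t ^+ N * Q <= `|g`_k| + `|rk|.
    have -> : t ^+ N * Q = `|g`_k - rk| by rewrite gk addrK normrM normrX.
    exact: ler_normB.
  rewrite [_ * e ^+ k]mulrC -mulrDr; exact: ler_wpM2l.
have hB : forall d, (d <= 2 * N)%N ->
    ((d ^ k)%N)%:R * `|R0| + e ^+ k * `|rk| < e ^+ k * (t ^+ N * Q).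
  move=> d hd.
  have Nk1 : 1 <= ((N ^ k)%N)%:R :> C by rewrite ler1n expn_gt0 hN1.
  apply: (le_lt_trans (y := ((N ^ k)%N)%:R * K)).
    rewrite /K mulrDr; apply: lerD.
      rewrite mulrA -natrX -natrM -expnMn; apply: ler_wpM2r; first exact: normr_ge0.
      by rewrite ler_nat leq_expr // mulnC.
    by apply: ler_peMl => //; rewrite mulr_ge0 ?normr_ge0.
  have hKN : K < N%:R * D.
    rewrite -ltr_pdivrMr //; apply: lt_le_trans hN0 _; by rewrite ler_nat.
  apply: (lt_le_trans (y := ((N ^ k)%N)%:R * (N%:R * D))).
    by rewrite ltr_pM2l // (lt_le_trans ltr01 Nk1).
  have -> : ((N ^ k)%N)%:R * (N%:R * D) = e ^+ k * Q * (c * ((N ^ k.+1)%N)%:R).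
    by rewrite /D expnSr natrM; ring.
  have -> : e ^+ k * (t ^+ N * Q) = e ^+ k * Q * t ^+ N by ring.
  by apply: ler_wpM2l; [rewrite mulr_ge0 // ltW | exact: hc].
have gnz : g != 0.
  apply/eqP => gz; move: hA (hB 0%N (leq0n _)); rewrite gz coef0 normr0 mul0r add0r.
  move=> h1 h2; have := lt_le_trans h2 h1; rewrite -subr_lt0 addrK.
  have hY : 0 <= ((0 ^ k)%N)%:R * `|R0| :> C by rewrite mulr_ge0 ?normr_ge0 ?ler0n.
  by move=> /(le_lt_trans hY); rewrite ltxx.
have [rs hrs] := closed_field_poly_normal g.
have lc : lead_coef g != 0 by rewrite lead_coef_eq0.
have hsz : (size rs <= 2 * N)%N.
  have e1 : size g = (size rs).+1 by rewrite {1}hrs size_scale // size_prod_XsubC.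
  have := @size_bound (size g) (size F) n N; rewrite e1 /=; apply => //.
    have hX1 : size X1 = 2 by rewrite /X1 size_XaddC.
    by have := size_comp_poly_leq F X1; rewrite -/g e1 hX1.
  exact: (size_F _ _ _ a hmn).
have [z zin zlt] : exists2 z, z \in rs & `|z| < e.
  case: (boolP (has (fun z => `|z| < e) rs)) => [/hasP // | /hasPn hno].
  exfalso.
  have Hb : forall b, b \in rs -> e <= `|b|.
    move=> b /hno; rewrite real_leNgt ?normr_real ?gtr0_real //.
  have := @coef_root_bound C (lead_coef g) e rs e0 Hb k; rewrite -hrs g0 => hcb.
  have := lt_le_trans (hB _ hsz) (le_trans hA (lerD hcb (lexx _))).
  by rewrite ltxx.
have rootz : root g z by rewrite hrs rootZ // root_prod_XsubC.
set zeta := z + w.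
have Fz : F.[zeta] = 0.
  have hz : X1.[z] = zeta by rewrite /X1 !hornerE.
  by move: rootz => /rootP; rewrite horner_comp hz.
have zw : zeta - w = z by rewrite /zeta addrK.
have zeta1 : 1 < `|zeta|.
  have h : `|w| <= `|zeta| + `|z|.
    have -> : w = zeta - z by rewrite /zeta; ring.
    exact: ler_normB.
  have h2 : t < `|zeta| + (t - 1).
    exact: le_lt_trans h (ler_ltD (lexx _) (lt_le_trans zlt et)).
  rewrite -(ltrD2r (t - 1)); have -> : 1 + (t - 1) = t by ring.
  exact: h2.
have zeta0 : zeta != 0 by rewrite -normr_gt0 (lt_trans ltr01 zeta1).
have h2 : (2%:R : C) != 0 by rewrite pnatr_eq0.
exists ((zeta + zeta^-1) / 2%:R); split.
  apply/rootP; have := @TnA_F C m n a zeta zeta0 hmn; rewrite -/N -/F Fz.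
  move/eqP; rewrite !mulf_eq0 (negbTE h2) expf_eq0 (negbTE zeta0) andbF orbF /=.
  by move/eqP.
have -> : (zeta + zeta^-1) / 2%:R - (w + w^-1) / 2%:R
    = z * ((1 - (zeta * w)^-1) / 2%:R).
  by rewrite -zw; field; rewrite wnz zeta0.
rewrite normrM.
apply: (le_lt_trans _ (lt_le_trans zlt eeps)).
rewrite -[X in _ <= X]mulr1; apply: ler_wpM2l; first exact: normr_ge0.
have hzw : 1 <= `|zeta * w|.
  rewrite normrM -[1]mulr1; apply: ler_pM => //; exact: ltW.
have hinv : `|(zeta * w)^-1| <= 1.
  by rewrite normfV invf_le1 // (lt_le_trans ltr01 hzw).
rewrite normrM normfV normr_nat ler_pdivrMr ?ltr0n // mul1r.
apply: le_trans (ler_normB _ _) _; rewrite normr1.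
by rewrite (_ : 2%:R = 1 + 1 :> C) // lerD2l.
Qed.
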